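(* For every ranking profile $R$ over a finite set of $m\geq 2$ candidates, there exists a ranking that is pair-priceable for $R$.
   Context: Let $C$ be a set of $m$ candidates. A ranking is a strict linear order over $C$; $\mathcal{R}$ denotes the set of all rankings over $C$. A ranking profile is a function $R:\mathcal{R}\to[0,1]$ with $\sum_\succ R(\succ)=1$. For a ranking $\succ$, $A(\succ)=\{(x,y)\in C\times C:x\succ y\}$. For $x\in X\subseteq C$, $u(\succ,x,X)=|\{y\in X\setminus\{x\}:x\succ y\}|$. A ranking $\rhd=x_1,\dots,x_m$ is pair-priceable for $R$ if there is $\pi:\mathcal{R}\times A(\rhd)\to[0,1]$ such that (1) $\pi(\succ,(x_i,x_j))\leq u(\succ,x_i,\{x_i,x_j\})$ for all $\succ$ and $(x_i,x_j)\in A(\rhd)$; (2) $\sum_{(x_i,x_j)\in A(\rhd)}\pi(\succ,(x_i,x_j))\leq\binom{m}{2}R(\succ)$ for all $\succ$; (3) $\sum_\succ\pi(\succ,(x_i,x_j))\leq1$ for all $(x_i,x_j)\in A(\rhd)$; (4) $\sum_\succ\sum_{(x_i,x_j)\in A(\rhd)}\pi(\succ,(x_i,x_j))>\binom{m}{2}-1$. *)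

(* Defs.v *)
From HB Require Import structures.
From mathcomp Require Import all_boot all_order all_algebra all_fingroup.
From mathcomp Require Import all_classical all_reals.
Set Implicit Arguments. Unset Strict Implicit. Unset Printing Implicit Defensive.
Import Order.TTheory GRing.Theory Num.Theory.
Local Open Scope ring_scope.

(* A ranking (strict linear order on C) is encoded by a
   permutation s : {perm 'I_m}, where s i is the candidate in position i
   (position 0 = top). *)
Definition ranking (m : nat) := {perm 'I_m}.

Definition prefers (m : nat) (s : ranking m) (x y : 'I_m) : bool :=
  ((s^-1)%g x < (s^-1)%g y)%N.

Definition util (m : nat) (s : ranking m) (x : 'I_m) (X : {set 'I_m}) : nat :=
  #|[set y in X | (y != x) && prefers s x y]|.

Definition is_profile (R : realType) (m : nat) (P : ranking m -> R) : Prop :=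
  (forall s, 0 <= P s <= 1) /\ \sum_(s : ranking m) P s = 1.

(* Pair-priceability of ranking t for profile P.  pi is given on all triples,
   but only its values on pairs (x,y) in A(t) (i.e. prefers t x y) matter. *)
Definition pair_priceable (R : realType) (m : nat) (P : ranking m -> R)
    (t : ranking m) : Prop :=
  exists pi : ranking m -> 'I_m -> 'I_m -> R,
    (forall s x y, prefers t x y -> 0 <= pi s x y <= 1) /\
    (forall s x y, prefers t x y -> pi s x y <= (util s x [set x; y])%:R) /\
    (forall s, \sum_(x : 'I_m) \sum_(y : 'I_m | prefers t x y) pi s x y
                 <= ('C(m, 2))%:R * P s) /\
    (forall x y, prefers t x y -> \sum_(s : ranking m) pi s x y <= 1) /\
    ('C(m, 2))%:R - 1 <
      \sum_(s : ranking m) \sum_(x : 'I_m) \sum_(y : 'I_m | prefers t x y) pi s x y.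

(* Main.v *)
Require Import Defs.
From HB Require Import structures.
From mathcomp Require Import all_boot all_order all_algebra all_fingroup.
From mathcomp Require Import all_classical all_reals.
From mathcomp Require Import ring lra zify.
Set Implicit Arguments. Unset Strict Implicit. Unset Printing Implicit Defensive.
Import Order.TTheory GRing.Theory Num.Theory.
Local Open Scope ring_scope.
Local Notation subsetP := fintype.subsetP.
Local Notation properP := fintype.properP.
Local Notation setIidPr := finset.setIidPr.
Local Notation in_setI := finset.in_setI.
Local Notation in_setD := finset.in_setD.
Local Notation in_setU := finset.in_setU.
Local Notation in_setC := finset.in_setC.
Local Notation in_set1 := finset.in_set1.
Local Notation setIC := finset.setIC.
Local Notation setUC := finset.setUC.
Local Notation in_set0 := finset.in_set0.
Local Notation setDE := finset.setDE.
Local Notation setUA := finset.setUA.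
Local Notation setIA := finset.setIA.
Local Notation setD1K := finset.setD1K.
Local Notation setIS := finset.setIS.
Local Notation setSI := finset.setSI.
Local Notation setCK := finset.setCK.
Local Notation in_setT := finset.in_setT.
Local Notation set0 := finset.set0.
Local Notation setP := finset.setP.
Local Notation subset_trans := fintype.subset_trans.
Section Hall.
Variables (R : realType) (I J : finType) (E : I -> J -> bool).

Definition nbh (Y : {set J}) : {set I} := [set i | [exists j in Y, E i j]].
Definition hallc (b : I -> R) (d : J -> R) :=
  forall Y : {set J}, \sum_(j in Y) d j <= \sum_(i in nbh Y) b i.
Definition feas (b : I -> R) (d : J -> R) :=
  exists f : I -> J -> R, (forall i j, 0 <= f i j) /\
    (forall i j, ~~ E i j -> f i j = 0) /\
    (forall i, \sum_j f i j <= b i) /\ (forall j, \sum_i f i j = d j).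
Definition meas (b : I -> R) (d : J -> R) :=
  addn #|[set j | d j != 0]| #|[set i | b i != 0]|.

Lemma sum_sub_le (T : finType) (A B : {set T}) (F : T -> R) :
  A \subset B -> (forall i, 0 <= F i) -> \sum_(i in A) F i <= \sum_(i in B) F i.
Proof.
move=> AB F0; rewrite (@big_setID _ _ _ _ B A) /= (finset.setIidPr AB) lerDl.
by apply: sumr_ge0.
Qed.

Lemma sum_union (T : finType) (A B : {set T}) (F : T -> R) :
  \sum_(i in A :|: B) F i = \sum_(i in A :\: B) F i + \sum_(i in B) F i.
Proof.
rewrite (@big_setID _ _ _ _ (A :|: B) B) /= addrC; congr (_ + _).
  by apply: eq_bigl => i; rewrite !inE; case: (i \in A); case: (i \in B).
by apply: eq_bigl => i; rewrite !inE; case: (i \in A); case: (i \in B).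
Qed.

Lemma nbhU (Y Z : {set J}) : nbh (Z :|: Y) = nbh Z :|: nbh Y.
Proof.
apply/setP => i; rewrite !inE; apply/existsP/orP.
  by case=> j /andP[]; rewrite inE => /orP[] jZ Eij; [left|right];
     apply/existsP; exists j; rewrite jZ.
by case=> /existsP[j /andP[jZ Eij]]; exists j; rewrite inE jZ ?orbT.
Qed.

Lemma nbhI (Y Z : {set J}) : nbh (Z :&: Y) \subset nbh Z :&: nbh Y.
Proof.
apply/subsetP => i; rewrite !inE => /existsP[j /andP[]]; rewrite inE.
by case/andP=> jZ jY Eij; apply/andP; split; apply/existsP; exists j;
   rewrite ?jZ ?jY.
Qed.

Lemma nbh_sub (Y Z : {set J}) : Y \subset Z -> nbh Y \subset nbh Z.
Proof.
move/subsetP=> YZ; apply/subsetP => i; rewrite !inE => /existsP[j /andP[jY E']].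
by apply/existsP; exists j; rewrite YZ.
Qed.

Lemma zero_feas b d : (forall i, 0 <= b i) -> (forall j, d j = 0) -> feas b d.
Proof.
move=> b0 d0; exists (fun _ _ => 0); split=> //; split=> //; split.
  by move=> i; rewrite big1.
by move=> j; rewrite big1 // d0.
Qed.

Lemma split_feas n b d :
  (forall b' d', (meas b' d' < n)%N -> (forall i, 0 <= b' i) ->
     (forall j, 0 <= d' j) -> hallc b' d' -> feas b' d') ->
  (meas b d <= n)%N -> (forall i, 0 <= b i) -> (forall j, 0 <= d j) ->
  hallc b d -> forall Y : {set J}, (exists2 j, j \in Y & d j != 0) ->
  (exists2 j, j \notin Y & d j != 0) ->
  \sum_(i in nbh Y) b i <= \sum_(j in Y) d j -> feas b d.
Proof.
move=> IH mn b0 d0 hb Y [j1 j1Y dj1] [j2 j2Y dj2] tight.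
pose d1 j := if j \in Y then d j else 0.
pose b1 i := if i \in nbh Y then b i else 0.
pose d2 j := if j \in Y then 0 else d j.
pose b2 i := if i \in nbh Y then 0 else b i.
have sub_b1 : [set i | b1 i != 0] \subset [set i | b i != 0].
  by apply/subsetP=> i; rewrite !inE /b1; case: ifP => //; rewrite eqxx.
have sub_b2 : [set i | b2 i != 0] \subset [set i | b i != 0].
  by apply/subsetP=> i; rewrite !inE /b2; case: ifP => //; rewrite eqxx.
have pr_d1 : [set j | d1 j != 0] \proper [set j | d j != 0].
  apply/properP; split.
    by apply/subsetP=> j; rewrite !inE /d1; case: ifP => //; rewrite eqxx.
  by exists j2; rewrite !inE /d1 ?(negbTE j2Y) ?eqxx.
have pr_d2 : [set j | d2 j != 0] \proper [set j | d j != 0].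
  apply/properP; split.
    by apply/subsetP=> j; rewrite !inE /d2; case: ifP => //; rewrite eqxx.
  by exists j1; rewrite !inE /d2 ?j1Y ?eqxx.
have m1 : (meas b1 d1 < n)%N.
  apply: leq_trans mn; rewrite /meas -addSn leq_add //.
    exact: proper_card. exact: subset_leq_card.
have m2 : (meas b2 d2 < n)%N.
  apply: leq_trans mn; rewrite /meas -addSn leq_add //.
    exact: proper_card. exact: subset_leq_card.
have [f1 [f10 [f1E [f1b f1d]]]] : feas b1 d1.
  apply: IH m1 _ _ _.
  - by move=> i; rewrite /b1; case: ifP.
  - by move=> j; rewrite /d1; case: ifP.
  move=> Z.
  have -> : \sum_(j in Z) d1 j = \sum_(j in Z :&: Y) d j.
    by rewrite big_mkcond [RHS]big_mkcond /=; apply: eq_bigr => j _;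
       rewrite /d1 in_setI; case: (j \in Z); case: (j \in Y).
  have -> : \sum_(i in nbh Z) b1 i = \sum_(i in nbh Z :&: nbh Y) b i.
    by rewrite big_mkcond [RHS]big_mkcond /=; apply: eq_bigr => i _;
       rewrite /b1 in_setI; case: (i \in nbh Z); case: (i \in nbh Y).
  apply: le_trans (hb _) _; apply: sum_sub_le => //; exact: nbhI.
have [f2 [f20 [f2E [f2b f2d]]]] : feas b2 d2.
  apply: IH m2 _ _ _.
  - by move=> i; rewrite /b2; case: ifP.
  - by move=> j; rewrite /d2; case: ifP.
  move=> Z.
  have -> : \sum_(j in Z) d2 j = \sum_(j in Z :\: Y) d j.
    by rewrite big_mkcond [RHS]big_mkcond /=; apply: eq_bigr => j _;
       rewrite /d2 in_setD; case: (j \in Z); case: (j \in Y).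
  have -> : \sum_(i in nbh Z) b2 i = \sum_(i in nbh Z :\: nbh Y) b i.
    by rewrite big_mkcond [RHS]big_mkcond /=; apply: eq_bigr => i _;
       rewrite /b2 in_setD; case: (i \in nbh Z); case: (i \in nbh Y).
  have := hb (Z :|: Y); rewrite nbhU !sum_union.
  move: tight; lra.
exists (fun i j => f1 i j + f2 i j); split; [|split; [|split]].
- by move=> i j; apply: addr_ge0.
- by move=> i j nE; rewrite f1E // f2E // addr0.
- move=> i; rewrite big_split /=.
  have -> : b i = b1 i + b2 i by rewrite /b1 /b2; case: ifP; rewrite ?addr0 ?add0r.
  exact: lerD.
- move=> j; rewrite big_split /= f1d f2d /d1 /d2; case: ifP; rewrite ?addr0 ?add0r //.
Qed.


Lemma sum_ind (T : finType) (A : {set T}) t (x : R) :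
  \sum_(j in A) (if j == t then x else 0) = if t \in A then x else 0.
Proof.
case: (boolP (t \in A)) => tA.
  rewrite (bigD1 t) //= eqxx big1 ?addr0 // => j /andP[_ /negbTE ->] //.
by apply: big1 => j jA; case: eqP => // ejt; move: jA; rewrite ejt (negbTE tA).
Qed.

Lemma le_sum_mem (T : finType) (A : {set T}) t (F : T -> R) :
  t \in A -> (forall i, 0 <= F i) -> F t <= \sum_(i in A) F i.
Proof.
move=> tA F0; rewrite (bigD1 t) //= lerDl; apply: sumr_ge0 => *; exact: F0.
Qed.




Definition bnew (b : I -> R) i0 (x : R) i := b i - (if i == i0 then x else 0).
Definition dnew (d : J -> R) j0 (x : R) j := d j - (if j == j0 then x else 0).

Lemma sum_bnew b i0 x (A : {set I}) :
  \sum_(i in A) bnew b i0 x i = \sum_(i in A) b i - (if i0 \in A then x else 0).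
Proof. by rewrite sumrB sum_ind. Qed.

Lemma sum_dnew d j0 x (A : {set J}) :
  \sum_(j in A) dnew d j0 x j = \sum_(j in A) d j - (if j0 \in A then x else 0).
Proof. by rewrite sumrB sum_ind. Qed.

Lemma transfer_hall b d i0 j0 x : E i0 j0 ->
  (forall i, 0 <= b i) -> hallc b d -> x <= b i0 ->
  (forall Z : {set J}, j0 \notin Z -> i0 \in nbh Z -> (exists2 j, j \in Z & d j != 0) ->
      x + \sum_(j in Z) d j <= \sum_(i in nbh Z) b i) ->
  hallc (bnew b i0 x) (dnew d j0 x).
Proof.
move=> Eij b0 hb xb hZ Z; rewrite sum_bnew sum_dnew.
case: (boolP (j0 \in Z)) => j0Z.
  have -> : i0 \in nbh Z by rewrite inE; apply/existsP; exists j0; rewrite j0Z.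
  by have := hb Z; lra.
rewrite subr0; case: (boolP (i0 \in nbh Z)) => i0Z; last by rewrite subr0.
case: (boolP [exists j in Z, d j != 0]) => [/existsP[j /andP[jZ dj]]|/existsPn dZ].
  by have := hZ Z j0Z i0Z (ex_intro2 _ _ j jZ dj); lra.
rewrite big1; last by move=> j jZ; have := dZ j; rewrite jZ /= negbK => /eqP.
have := le_sum_mem i0Z b0; lra.
Qed.

Lemma transfer_feas b d i0 j0 x : E i0 j0 -> 0 <= x ->
  feas (bnew b i0 x) (dnew d j0 x) -> feas b d.
Proof.
move=> Eij x0 [f [f0 [fE [fb fd]]]].
exists (fun i j => f i j + (if (i == i0) && (j == j0) then x else 0)).
split; [|split; [|split]].
- by move=> i j; apply: addr_ge0 => //; case: ifP.
- move=> i j nE; rewrite fE // add0r; case: ifP => // /andP[/eqP ei /eqP ej].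
  by move: nE; rewrite ei ej Eij.
- move=> i; rewrite big_split /=; have := fb i; rewrite /bnew.
  case: (boolP (i == i0)) => /= _.
    have -> : \sum_j (if j == j0 then x else 0) = x.
      by rewrite -big_mkcond big_pred1_eq.
    lra.
  by rewrite big1_eq addr0 subr0.
- move=> j; rewrite big_split /= fd /dnew.
  case: (boolP (j == j0)) => /= _.
    have -> : \sum_i (if (i == i0) && true then x else 0) = x.
      by under eq_bigr do rewrite andbT; rewrite -big_mkcond big_pred1_eq.
    lra.
  by rewrite big1 ?addr0 ?subr0 // => i _; rewrite andbF.
Qed.

Lemma exists_argmin (T : finType) (P : pred T) (F : T -> R) t0 :
  P t0 -> exists t, P t /\ forall u, P u -> F t <= F u.
Proof.
move=> Pt0; case: (arg_minP F Pt0) => t Pt H; by exists t.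
Qed.

Lemma hall_feas n : forall b d, (meas b d <= n)%N -> (forall i, 0 <= b i) ->
  (forall j, 0 <= d j) -> hallc b d -> feas b d.
Proof.
elim: n => [|n IH] b d mn b0 d0 hb.
  apply: zero_feas => // j; apply/eqP; apply/negPn/negP => dj.
  move: mn; rewrite /meas leqn0 addn_eq0 => /andP[/eqP/cards0_eq h _].
  by move/setP: h => /(_ j); rewrite !inE dj.
have IH' : forall b' d', (meas b' d' < n.+1)%N -> (forall i, 0 <= b' i) ->
     (forall j, 0 <= d' j) -> hallc b' d' -> feas b' d'.
  by move=> b' d' h; apply: IH.
case: (boolP [exists j, d j != 0]) => [/existsP[j0 dj0] | /existsPn dn]; last first.
  by apply: zero_feas => // j; have := dn j; rewrite negbK => /eqP.
case: (boolP [exists Y : {set J}, [&& [exists j in Y, d j != 0],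
   [exists j in ~: Y, d j != 0] & \sum_(i in nbh Y) b i <= \sum_(j in Y) d j]]).
  move=> /existsP[Y /and3P[/existsP[j1 /andP[j1Y dj1]] /existsP[j2 /andP[j2Y dj2]] tight]].
  apply: (split_feas IH' mn b0 d0 hb (ex_intro2 _ _ j1 j1Y dj1)) => //.
  by exists j2; rewrite inE in j2Y.
move=> noB.
have caseA : forall Y : {set J}, (exists2 j, j \in Y & d j != 0) -> j0 \notin Y ->
    \sum_(j in Y) d j < \sum_(i in nbh Y) b i.
  move=> Y [j jY dj] j0Y; rewrite ltNge; apply/negP => le.
  move/existsPn: noB => /(_ Y); rewrite le andbT; apply/negP; rewrite negbK.
  apply/andP; split; apply/existsP; [exists j | exists j0]; rewrite ?jY ?inE ?j0Y //.
have dpos : 0 < d j0 by rewrite lt_def dj0 d0.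
have [i0 i0N bi0] : exists2 i, i \in nbh [set j0] & 0 < b i.
  case: (boolP [exists i in nbh [set j0], 0 < b i]) => [/existsP[i /andP[]]|/existsPn nb].
    by exists i.
  have := hb [set j0]; rewrite big_set1 big1; first by lra.
  move=> i iN; have := nb i; rewrite iN /= => nbi.
  by apply/eqP; rewrite eq_le b0 andbT leNgt.
have Eij : E i0 j0.
  by move: i0N; rewrite inE => /existsP[j /andP[]]; rewrite inE => /eqP ->.
pose mu := if d j0 <= b i0 then d j0 else b i0.
have mupos : 0 < mu by rewrite /mu; case: ifP.
have mud : mu <= d j0 by rewrite /mu; case: ifP => // /negbT; rewrite -ltNge => /ltW.
have mub : mu <= b i0 by rewrite /mu; case: ifP.
have sub_b : forall x, [set i | bnew b i0 x i != 0] \subset [set i | b i != 0].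
  move=> x; apply/subsetP=> i; rewrite !inE /bnew; case: (boolP (i == i0)) => [/eqP ->|_].
    by rewrite lt0r in bi0; case/andP: bi0.
  by rewrite subr0.
have sub_d : forall x, [set j | dnew d j0 x j != 0] \subset [set j | d j != 0].
  move=> x; apply/subsetP=> j; rewrite !inE /dnew; case: (boolP (j == j0)) => [/eqP ->|_].
    by [].
  by rewrite subr0.
have nb0 : forall x, x <= b i0 -> forall i, 0 <= bnew b i0 x i.
  move=> x xb i; rewrite /bnew; case: ifP => [/eqP ->|_]; last by rewrite subr0.
  by rewrite subr_ge0.
have nd0 : forall x, x <= d j0 -> forall j, 0 <= dnew d j0 x j.
  move=> x xd j; rewrite /dnew; case: ifP => [/eqP ->|_]; last by rewrite subr0.
  by rewrite subr_ge0.
pose F (Y : {set J}) := \sum_(i in nbh Y) b i - \sum_(j in Y) d j.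
pose PY (Y : {set J}) := [&& j0 \notin Y, i0 \in nbh Y, [exists j in Y, d j != 0] & F Y < mu].
case: (boolP [exists Y, PY Y]) => [/existsP[Y0 PY0] | noP].
  have [Ys [PYs Ysmin]] := exists_argmin F PY0.
  case/and4P: (PYs) => j0Ys i0Ys /existsP[js /andP[jsY djs]] FYs.
  have Fpos : 0 < F Ys.
    by rewrite /F subr_gt0; apply: caseA => //; exists js.
  apply: (transfer_feas (x := F Ys) Eij (ltW Fpos)).
  have hb' : hallc (bnew b i0 (F Ys)) (dnew d j0 (F Ys)).
    apply: transfer_hall => //; first by lra.
    move=> Z j0Z i0Z [j jZ dj].
    case: (boolP (PY Z)) => [PZ | nPZ].
      by rewrite -lerBrDr; exact: Ysmin.
    move: nPZ; rewrite /PY j0Z i0Z /=.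
    have -> : [exists j in Z, d j != 0] by apply/existsP; exists j; rewrite jZ.
    rewrite /= -leNgt => h; rewrite -lerBrDr; apply: ltW; exact: lt_le_trans FYs h.
  apply: (split_feas IH' _ (nb0 _ _) (nd0 _ _) hb' (Y := Ys)).
  - apply: leq_trans mn; rewrite /meas leq_add //; exact: subset_leq_card.
  - lra.
  - lra.
  - exists js => //; rewrite /dnew; case: (js =P j0) => [ej|_]; last by rewrite subr0.
    by rewrite -ej jsY in j0Ys.
  - exists j0 => //; rewrite /dnew eqxx subr_eq0; apply/eqP; lra.
  - rewrite sum_bnew sum_dnew i0Ys (negbTE j0Ys) subr0 /F; lra.
apply: (transfer_feas (x := mu) Eij (ltW mupos)).
have hb' : hallc (bnew b i0 mu) (dnew d j0 mu).
  apply: transfer_hall => //.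
  move=> Z j0Z i0Z [j jZ dj].
  have := negbT (negbTE (existsPn noP Z)); rewrite /PY j0Z i0Z /=.
  have -> : [exists j in Z, d j != 0] by apply/existsP; exists j; rewrite jZ.
  by rewrite /= -leNgt /F; lra.
apply: IH => //; [| exact: nb0 | exact: nd0].
rewrite /meas -ltnS; move: mn; apply: leq_trans.
case: (boolP (d j0 <= b i0)) => hdb.
  rewrite -addSn leq_add //; last exact: subset_leq_card.
  apply: proper_card; apply/properP; split; first exact: sub_d.
  exists j0; rewrite !inE //= /dnew eqxx /mu hdb subrr eqxx //.
rewrite -addnS leq_add //; first exact: subset_leq_card.
apply: proper_card; apply/properP; split; first exact: sub_b.
exists i0; rewrite !inE.
  by rewrite lt0r in bi0; case/andP: bi0.
by rewrite /bnew eqxx /mu (negbTE hdb) subrr eqxx.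
Qed.

End Hall.
Section Borda.
Variables (R : realType) (m : nat).
Implicit Types (s : ranking m) (X Y : {set 'I_m}).

Definition dX s X u := #|[set v in X | prefers s u v]|.
Definition borda (b : ranking m -> R) X u := \sum_s b s * (dX s X u)%:R.

Lemma prefers_irr s u : prefers s u u = false.
Proof. by rewrite /prefers ltnn. Qed.

Lemma prefers_asym s u v : prefers s u v -> prefers s v u = false.
Proof. by rewrite /prefers => h; apply/negbTE; rewrite -leqNgt ltnW. Qed.

Lemma prefers_total s u v : u != v -> prefers s u v || prefers s v u.
Proof.
move=> nuv; rewrite /prefers -neq_ltn; apply: contra nuv => /eqP h.
by apply/eqP; apply: (perm_inj (s := (s^-1)%g)); apply: val_inj.
Qed.

Lemma prefers_trans s u v w : prefers s u v -> prefers s v w -> prefers s u w.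
Proof. rewrite /prefers; exact: ltn_trans. Qed.

Lemma pair_count s Y :
  (\sum_(y in Y) #|[set v in Y | prefers s y v]|).*2 = (#|Y| * #|Y|.-1)%N.
Proof.
have key : forall y, y \in Y ->
    (#|[set v in Y | prefers s y v]| + #|[set v in Y | prefers s v y]|)%N = #|Y|.-1.
  move=> y yY; rewrite (cardsD1 y Y) yY add1n /= -cardsUI.
  have -> : [set v in Y | prefers s y v] :&: [set v in Y | prefers s v y] = set0.
    apply/setP=> v; rewrite !inE; apply/negbTE.
    by apply/negP=> /andP[/andP[_ h1] /andP[_ h2]]; rewrite prefers_asym in h2.
  rewrite cards0 addn0; apply: eq_card => v; rewrite !inE.
  case: (boolP (v == y)) => [/eqP ->|nvy]; first by rewrite !prefers_irr andbF.
  case: (v \in Y) => //=; rewrite orbC; exact: prefers_total.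
have sw : \sum_(y in Y) #|[set v in Y | prefers s v y]| =
          \sum_(y in Y) #|[set v in Y | prefers s y v]|.
  have cnt : forall (F : 'I_m -> 'I_m -> bool) y,
      #|[set v in Y | F v y]| = \sum_(v in Y) (F v y : nat).
    move=> F y; rewrite -sum1_card big_mkcond [RHS]big_mkcond /=.
    by apply: eq_bigr => v _; rewrite inE; case: (v \in Y); case: (F v y).
  rewrite (eq_bigr _ (fun y _ => cnt (fun v y => prefers s v y) y)).
  rewrite (eq_bigr _ (fun y _ => cnt (fun v y => prefers s y v) y)) /=.
  exact: exchange_big.
rewrite -addnn -{2}sw -big_split /=.
rewrite (eq_bigr (fun _ => #|Y|.-1)); last by move=> y yY; exact: key.
by rewrite sum_nat_const mulnC.
Qed.

End Borda.
Section Borda2.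
Variables (R : realType) (m : nat).
Implicit Types (s : ranking m) (X Y : {set 'I_m}).

Lemma dX_lb_G s X x Y y : x \in X -> Y \subset X :\ x -> y \in Y ->
  (forall v, v \in Y -> prefers s v x) ->
  ((dX s X x + #|[set v in Y | prefers s y v]|).+1 <= dX s X y)%N.
Proof.
move=> xX YX yY hG.
have YX' : forall v, v \in Y -> (v != x) && (v \in X).
  by move=> v vY; move/subsetP: YX => /(_ v vY); rewrite !inE.
set A := [set v in X | prefers s x v]; set B := [set v in Y | prefers s y v].
have dAB : A :&: B = set0.
  apply/setP=> v; rewrite !inE; apply/negbTE; apply/negP.
  by case/andP=> /andP[_ h1] /andP[vY _]; rewrite prefers_asym ?hG in h1.
have xAB : x \notin A :|: B.
  rewrite !inE prefers_irr andbF /=; apply/negP=> /andP[xY _].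
  by case/andP: (YX' x xY); rewrite eqxx.
have sub : (x |: (A :|: B)) \subset [set v in X | prefers s y v].
  apply/subsetP=> v; rewrite !inE => /orP[/eqP ->|/orP[/andP[vX xv]|/andP[vY yv]]].
  - by rewrite xX hG.
  - by rewrite vX; apply: prefers_trans (hG _ yY) xv.
  - by case/andP: (YX' v vY) => _ ->.
have := subset_leq_card sub; rewrite /dX cardsU1 xAB /= add1n.
by rewrite -cardsUI dAB cards0 addn0.
Qed.

Lemma dX_lb s X y Y : Y \subset X ->
  (#|[set v in Y | prefers s y v]| <= dX s X y)%N.
Proof.
move=> YX; apply: subset_leq_card; apply/subsetP=> v; rewrite !inE.
by case/andP=> vY ->; rewrite (subsetP YX v vY).
Qed.

Lemma dX_ub s X x : x \in X -> (dX s X x <= #|X|.-1)%N.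
Proof.
move=> xX; rewrite /dX (cardsD1 x X) xX add1n /=; apply: subset_leq_card.
by apply/subsetP=> v; rewrite !inE => /andP[vX xv]; rewrite vX andbT;
   apply: contraTneq xv => ->; rewrite prefers_irr.
Qed.

Lemma voter_bounds s X x Y : x \in X -> Y \subset X :\ x ->
  let cY := (\sum_(y in Y) dX s X y)%N in
  let r := #|Y| in
  ((forall v, v \in Y -> prefers s v x) ->
      (r * dX s X x).*2 + r * r.+1 <= cY.*2)%N /\
  ((r * dX s X x).*2 + r * r.-1 <= cY.*2 + (r * #|X|.-1).*2)%N.
Proof.
move=> xX YX cY r.
have YXs : Y \subset X := subset_trans YX (subsetDl X [set x]).
have pc := pair_count s Y.
split.
  move=> hG.
  have : (\sum_(y in Y) (dX s X x + #|[set v in Y | prefers s y v]| + 1) <= cY)%N.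
    by apply: leq_sum => y yY; rewrite addn1; apply: dX_lb_G.
  rewrite !big_split /= sum_nat_const sum1_card -/r => h.
  move: pc; rewrite -/r => pc.
  rewrite -!mul2n; rewrite -mul2n in pc.
  move: h pc; rewrite -/cY; move: (cY) (r) (dX s X x) (\sum_(i in Y) _)%N.
  case=> [|c] [|rr] dx S /=; nia.
have : (\sum_(y in Y) #|[set v in Y | prefers s y v]| <= cY)%N.
  by apply: leq_sum => y yY; apply: dX_lb.
rewrite -leq_double pc => h.
have hx := dX_ub s xX.
move: pc; rewrite -/r => pc.
rewrite -!mul2n; rewrite -mul2n -/r in h.
move: h hx; rewrite -/cY; move: (cY) (r) (dX s X x) (#|X|.-1).
case=> [|c] [|rr] dx k /=; nia.
Qed.

End Borda2.
Section Borda3.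
Variables (R : realType) (m : nat).
Implicit Types (s : ranking m) (X Y : {set 'I_m}).

Lemma natr_pred (n : nat) : (0 < n)%N -> (n.-1)%:R = n%:R - 1 :> R.
Proof. by case: n => // n _; rewrite /= -natr1 addrK. Qed.

Lemma borda_bound (b : ranking m -> R) X x Y :
  (forall s, 0 <= b s) -> x \in X ->
  (forall u, u \in X -> borda b X u <= borda b X x) ->
  Y \subset X :\ x -> (0 < #|Y|)%N ->
  (\sum_s b s) * (#|Y|.+1)%:R <=
    (#|X|%:R *+ 2) * \sum_(s in [set s | [exists y in Y, prefers s x y]]) b s.
Proof.
move=> b0 xX bmax YX rpos.
set r := #|Y|; set k := #|X|.
set N := [set s | [exists y in Y, prefers s x y]].
have kpos : (0 < k)%N by rewrite /k (cardsD1 x X) xX.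
have YXs : Y \subset X := subset_trans YX (subsetDl X [set x]).
pose cR s := ((\sum_(y in Y) dX s X y)%N)%:R : R.
pose eR s := ((r * dX s X x)%N)%:R : R.
have step1 : \sum_s b s * cR s <= \sum_s b s * eR s.
  have -> : \sum_s b s * cR s = \sum_(y in Y) borda b X y.
    rewrite /borda exchange_big /=; apply: eq_bigr => s _.
    by rewrite /cR natr_sum mulr_sumr.
  have -> : \sum_s b s * eR s = borda b X x *+ r.
    rewrite /borda -sumrMnl; apply: eq_bigr => s _.
    by rewrite /eR natrM mulrCA mulr_natl.
  rewrite -sumr_const; apply: ler_sum => y yY; apply: bmax.
  by move/subsetP: YXs; apply.
set A := ((r * r.-1)%N%:R - ((r * k.-1)%N)%:R *+ 2) : R.
set B := ((r * r.+1)%N)%:R : R.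
have step2 : forall s, b s * (if s \in N then A else B) <=
    (b s * cR s - b s * eR s) *+ 2.
  move=> s; rewrite -mulrBr -mulrnAr; apply: ler_wpM2l => //.
  have [hG hN] := voter_bounds s xX YX.
  case: (boolP (s \in N)) => sN.
    move: hN; rewrite -(ler_nat R) !natrD -!muln2 !natrM -/r /A /cR /eR.
    rewrite !mulr_natr; lra.
  have hG' : forall v, v \in Y -> prefers s v x.
    move=> v vY; move: sN; rewrite inE negb_exists => /forallP /(_ v).
    rewrite vY /= => nxv.
    have vx : v != x by move/subsetP: YX => /(_ v vY); rewrite !inE => /andP[].
    by move: (prefers_total s vx); rewrite (negbTE nxv) orbF.
  move: (hG hG'); rewrite -(ler_nat R) !natrD -!muln2 !natrM -/r /B /cR /eR.
  rewrite !mulr_natr; lra.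
have step3 : \sum_s b s * (if s \in N then A else B) <= 0.
  apply: le_trans (ler_sum _ (fun s _ => step2 s)) _.
  rewrite sumrMnl sumrB; move: step1; lra.
set BN := \sum_(s in N) b s.
set BG := \sum_(s | s \notin N) b s.
have eb : \sum_s b s = BN + BG by rewrite (bigID (mem N)).
have eL : \sum_s b s * (if s \in N then A else B) = A * BN + B * BG.
  rewrite (bigID (mem N)) /= /BN /BG !mulr_sumr; congr (_ + _).
    by apply: eq_bigr => s ->; rewrite mulrC.
  by apply: eq_bigr => s /negbTE ->; rewrite mulrC.
have rR : (0 : R) < r%:R by rewrite ltr0n.
have eA : A = r%:R * (r%:R - 1) - r%:R * (k%:R - 1) *+ 2.
  by rewrite /A !natrM !natr_pred.
have eB : B = r%:R * (r%:R + 1) by rewrite /B natrM -natr1.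
have key : A * BN + B * BG = r%:R * ((r%:R + 1) * (BN + BG) - (k%:R *+ 2) * BN).
  rewrite eA eB; rewrite !mulr2n; ring.
rewrite eb; move: step3; rewrite eL key pmulr_rle0 //; lra.
Qed.

End Borda3.
Section Gen.
Variables (R : realType) (m : nat) (D : nat -> R).

Fixpoint valid (beta : R) (k : nat) : Prop :=
  match k with
  | 0 => True
  | k'.+1 => (0 <= D k'.+1 /\ D k'.+1 <= 1) /\
      (forall r : nat, (1 <= r <= k')%N ->
         D k'.+1 * r%:R * (k'.+1)%:R *+ 2 <= beta * (r.+1)%:R) /\
      valid (beta - D k'.+1 * k'%:R) k'
  end.

Fixpoint total (k : nat) : R :=
  match k with 0 => 0 | k'.+1 => D k'.+1 * k'%:R + total k' end.

Definition before (sq : seq 'I_m) (u v : 'I_m) := (v \in sq) && (index u sq < index v sq)%N.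

Lemma before_notin sq x v : x \notin sq -> before sq x v = false.
Proof.
by move=> xs; rewrite /before memNindex // ltnNge index_size andbF.
Qed.

Lemma before_mem sq u v : before sq u v -> (u \in sq) && (v \in sq).
Proof.
case/andP=> vs lt; rewrite vs andbT -index_mem; apply: leq_trans lt _.
exact: index_size.
Qed.

Lemma before_cons x sq u v : x \notin sq ->
  before (x :: sq) u v = ((u == x) && (v \in sq)) || before sq u v.
Proof.
move=> xs; rewrite /before /= inE.
case: (boolP (u == x)) => [/eqP ->|nux].
  rewrite eqxx /=; case: (boolP (v == x)) => [/eqP ->|nvx].
    by rewrite eqxx /= (negbTE xs) /= ltnn.
  have nxv : (x == v) = false by rewrite eq_sym (negbTE nvx).
  by rewrite nxv /= ltn0Sn andbT; case: (v \in sq).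
have nxu : (x == u) = false by rewrite eq_sym (negbTE nux).
rewrite nxu /=.
case: (boolP (v == x)) => [/eqP ->|nvx]; first by rewrite eqxx /= (negbTE xs).
have nxv : (x == v) = false by rewrite eq_sym (negbTE nvx).
by rewrite nxv.
Qed.

Lemma sum_before_cons x sq (F : 'I_m -> 'I_m -> R) (G : 'I_m -> R) : x \notin sq ->
  \sum_u \sum_(v | before (x :: sq) u v) (if u == x then G v else F u v) =
  \sum_(v | v \in sq) G v + \sum_u \sum_(v | before sq u v) F u v.
Proof.
move=> xs; rewrite (bigD1 x) //= [X in _ = _ + X](bigD1 x) //=.
rewrite [X in _ = _ + (X + _)]big_pred0; last by move=> v; rewrite before_notin.
rewrite add0r; congr (_ + _).
  by apply: eq_big => [v|v _]; rewrite ?before_cons ?eqxx // (before_notin _ xs) orbF.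
apply: eq_bigr => u nux; apply: eq_big => [v|v _]; first by rewrite before_cons // (negbTE nux).
by rewrite (negbTE nux).
Qed.

Lemma le_sum_all (T : finType) (F : T -> R) t :
  (forall i, 0 <= F i) -> F t <= \sum_i F i.
Proof.
by move=> F0; rewrite (bigD1 t) //= lerDl; apply: sumr_ge0.
Qed.

Lemma gen k : forall (X : {set 'I_m}) (b : ranking m -> R), #|X| = k ->
  (forall s, 0 <= b s) -> valid (\sum_s b s) k ->
  exists sq (pi : ranking m -> 'I_m -> 'I_m -> R),
  uniq sq /\ (forall z, (z \in sq) = (z \in X)) /\
   (forall s u v, before sq u v -> 0 <= pi s u v /\ pi s u v <= (prefers s u v)%:R) /\
   (forall s, \sum_u \sum_(v | before sq u v) pi s u v <= b s) /\
   (forall u v, before sq u v -> \sum_s pi s u v <= 1) /\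
   total k <= \sum_s \sum_u \sum_(v | before sq u v) pi s u v.
Proof.
elim: k => [|k IH] X b cX b0 vb.
  exists [::], (fun _ _ _ => 0).
  split; first by [].
  split; first by move=> z; move/cards0_eq: cX => ->; rewrite in_set0.
  split; first by [].
  split; first by move=> s; rewrite big1 // => u _; rewrite big1.
  split; first by [].
  by rewrite /= big1 // => s _; rewrite big1 // => u _; rewrite big1.
case: vb => [[D0 D1] [Dcond vb']].
have [x0 x0X] : exists x0, x0 \in X.
  by apply/set0Pn; rewrite -card_gt0 cX.
case: (@arg_maxP _ _ _ x0 (mem X) (borda b X) x0X) => x xX0 xmax0.
have xX : x \in X := xX0.
have xmax : forall u, u \in X -> borda b X u <= borda b X x.
  by move=> u uX; apply: (xmax0 u uX).
pose E := fun (s : ranking m) (y : 'I_m) => prefers s x y.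
pose d := fun y : 'I_m => if y \in X :\ x then D k.+1 else 0.
have cXx : #|X :\ x| = k by move: cX; rewrite (cardsD1 x X) xX add1n => -[].
have hall : hallc E b d.
  move=> Y; set Y' := Y :&: (X :\ x).
  have -> : \sum_(y in Y) d y = D k.+1 *+ #|Y'|.
    rewrite -sumr_const big_mkcond [RHS]big_mkcond /=; apply: eq_bigr => y _.
    by rewrite /d in_setI; case: (y \in Y); case: (y \in X :\ x).
  case: (posnP #|Y'|) => [->|rpos]; first by rewrite mulr0n; apply: sumr_ge0.
  have Y'X : Y' \subset X :\ x by apply: subsetIr.
  have bb := borda_bound b0 xX xmax Y'X rpos.
  have rk : (#|Y'| <= k)%N by rewrite -cXx; apply: subset_leq_card.
  have := Dcond #|Y'|; rewrite rpos rk => /(_ isT) hc.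
  apply: le_trans _ (sum_sub_le (nbh_sub E (subsetIl Y (X :\ x))) b0).
  change (D k.+1 *+ #|Y'| <= \sum_(i in [set s | [exists y in Y', prefers s x y]]) b i).
  rewrite cX in bb; move: bb hc.
  set BN := \sum_(i in _) b i; set beta := \sum_s b s.
  move=> bb hc.
  have h : (D k.+1 * #|Y'|%:R) * ((k.+1)%:R *+ 2) <= BN * ((k.+1)%:R *+ 2).
    by rewrite mulrnAr; apply: le_trans (le_trans hc bb) _; rewrite mulrC.
  rewrite -mulr_natr; move: h; rewrite ler_pM2r //.
  by rewrite pmulrn_rgt0 // ltr0n.
have [f [f0 [fE [fb fd]]]] := @hall_feas R _ _ E _ b d (leqnn _) b0
  (fun y => ltac:(rewrite /d; case: ifP => _ //; lra)) hall.
pose b' := fun s => b s - \sum_y f s y.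
have b'0 : forall s, 0 <= b' s by move=> s; rewrite /b' subr_ge0.
have sb' : \sum_s b' s = \sum_s b s - D k.+1 * k%:R.
  rewrite /b' sumrB exchange_big /=; congr (_ - _).
  rewrite (eq_bigr _ (fun y _ => fd y)) /d -big_mkcond /= sumr_const cXx.
  by rewrite mulr_natr.
have [sq' [pi' [uq' [mem' [pos' [bud' [pair' tot']]]]]]] := IH (X :\ x) b' cXx b'0
  ltac:(by rewrite sb').
have xs : x \notin sq' by rewrite mem' !inE eqxx.
have fle1 : forall s v, f s v <= 1.
  move=> s v; apply: le_trans (le_sum_all s (fun s => f0 s v)) _.
  by rewrite fd /d; case: ifP => _ //; lra.
exists (x :: sq'), (fun s u v => if u == x then f s v else pi' s u v).
split; [|split; [|split; [|split; [|split]]]].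
- by rewrite /= xs uq'.
- move=> z; rewrite inE mem' !inE; case: (boolP (z == x)) => [/eqP ->|] //=.
- move=> s u v; rewrite before_cons // => /orP[/andP[/eqP -> vs]|bs].
    rewrite eqxx; split => //; case: (boolP (prefers s x v)) => h.
      exact: fle1.
    by rewrite fE.
  have nux : u != x by apply: contraTneq (before_mem bs) => ->; rewrite (negbTE xs).
  by rewrite (negbTE nux); apply: pos'.
- move=> s; rewrite sum_before_cons //.
  apply: le_trans (lerD _ (bud' s)) _.
    by apply: (@le_trans _ _ (\sum_v f s v)); [rewrite [X in _ <= X](bigID (fun v => v \in sq')) /= lerDl; apply: sumr_ge0 | apply: lexx].
  by rewrite /b' addrC subrK.
- move=> u v; rewrite before_cons // => /orP[/andP[/eqP -> vs]|bs].
    by rewrite eqxx fd /d; case: ifP => _ //; lra.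
  have nux : u != x by apply: contraTneq (before_mem bs) => ->; rewrite (negbTE xs).
  have -> : \sum_s (if u == x then f s v else pi' s u v) = \sum_s pi' s u v.
    by apply: eq_bigr => s _; rewrite (negbTE nux).
  exact: pair'.
- rewrite (eq_bigr _ (fun s _ => sum_before_cons (pi' s) (f s) xs)) big_split /=.
  rewrite /=; apply: lerD; last exact: tot'.
  rewrite exchange_big /= (eq_bigr (fun _ => D k.+1)); last first.
    by move=> v vs; rewrite fd /d -mem' vs.
  rewrite sumr_const.
  have -> : #|sq'| = k by rewrite -cXx; apply: eq_card => z; rewrite mem'.
  by rewrite mulr_natr.
Qed.

End Gen.
Section Final.
Variables (R : realType) (m : nat).

Lemma util_eq (s : ranking m) x y : x != y ->
  util s x [set x; y] = prefers s x y.
Proof.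
move=> nxy; rewrite /util.
have E : [set z in [set x; y] | (z != x) && prefers s x z] =
         if prefers s x y then [set y] else set0.
  apply/setP=> z; rewrite !inE.
  case: (eqVneq z x) => [->|nzx].
    by rewrite prefers_irr andbF; case: (prefers s x y); rewrite ?inE // (negbTE nxy).
  case: (eqVneq z y) => [->|nzy] /=.
    by case: (prefers s x y); rewrite ?inE ?eqxx.
  by case: (prefers s x y); rewrite ?inE // (negbTE nzy).
by rewrite E; case: (prefers s x y); rewrite ?cards1 ?cards0.
Qed.

Lemma seq_perm (sq : seq 'I_m) : (0 < m)%N -> uniq sq -> (forall z, z \in sq) ->
  exists t : ranking m, forall u v, prefers t u v = before sq u v.
Proof.
move=> m0 uq all.
have sz : size sq = m.
  rewrite -(card_uniqP uq) -[RHS]card_ord; apply: eq_card => z; by rewrite all.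
pose z0 := Ordinal m0.
pose f := fun i : 'I_m => nth z0 sq i.
have finj : injective f.
  move=> i j /eqP; rewrite /f nth_uniq ?sz ?ltn_ord // => /eqP; exact: val_inj.
exists (perm finj) => u v.
have key : forall w, val ((perm finj)^-1 w)%g = index w sq.
  move=> w; have wlt : (index w sq < m)%N by move: (index_mem w sq); rewrite all sz.
  suff -> : ((perm finj)^-1 w)%g = Ordinal wlt by [].
  apply: (perm_inj (s := perm finj)); rewrite permKV permE /f /=.
  by rewrite nth_index.
by rewrite /prefers /before !key all.
Qed.

Definition Dm (j : nat) : R :=
  if (4 <= j)%N then 1 else if j == 3 then 3/4 else
  if j == 2 then (if m == 2 then 1/2 else 3/4) else 0.

Lemma C2 n : ('C(n, 2)).*2 = (n * n.-1)%N.
Proof.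
elim: n => // n IH; rewrite binS bin1 doubleD IH.
case: n {IH} => // n /=; nia.
Qed.

Lemma valid3 n : m != 2 -> valid Dm ('C(n.+3, 2))%:R n.+3.
Proof.
move=> m2; elim: n => [|n IH].
  rewrite /= /Dm /= (negbTE m2) /= (_ : 'C(3, 2) = 3) //.
  split; first by split; lra.
  split.
    move=> r /andP[r1 r2]; case: r r1 r2 => [|[|[|r]]] // _ _; rewrite ?mulr2n; lra.
  split; first by split; lra.
  split.
    move=> r /andP[r1 r2]; case: r r1 r2 => [|[|r]] // _ _; rewrite ?mulr2n; lra.
  split; first by split; lra.
  split => //.
  by move=> r /andP[r1 r2]; case: r r1 r2.
have D4 : Dm n.+4 = 1 by rewrite /Dm.
change ((0 <= Dm n.+4 /\ Dm n.+4 <= 1) /\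
      (forall r : nat, (1 <= r <= n.+3)%N ->
         Dm n.+4 * r%:R * (n.+4)%:R *+ 2 <= ('C(n.+4, 2))%:R * (r.+1)%:R) /\
      valid Dm (('C(n.+4, 2))%:R - Dm n.+4 * (n.+3)%:R) n.+3).
rewrite D4; split; first by split; lra.
split.
  move=> r /andP[r1 r2]; rewrite mul1r -!natrM -mulr_natr -natrM ler_nat.
  have := C2 n.+4; rewrite -mul2n /=; nia.
have -> : ('C(n.+4, 2))%:R - 1 * (n.+3)%:R = ('C(n.+3, 2))%:R :> R.
  by rewrite binS bin1 natrD mul1r addrK.
exact: IH.
Qed.

Lemma total3 n : m != 2 -> total Dm n.+3 = ('C(n.+3, 2))%:R - 3/4.
Proof.
move=> m2; elim: n => [|n IH].
  rewrite /= /Dm /= (negbTE m2) /= (_ : 'C(3, 2) = 3) //; lra.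
have -> : total Dm n.+4 = Dm n.+4 * (n.+3)%:R + total Dm n.+3 by [].
rewrite IH (_ : Dm n.+4 = 1) // [in RHS]binS bin1 natrD; lra.
Qed.

Lemma valid2 : m = 2 -> valid Dm 1 m.
Proof.
move=> m2; rewrite [X in valid _ _ X]m2; have D2 : Dm 2 = 1/2 by rewrite /Dm m2.
have D1 : Dm 1 = 0 by [].
split; first by rewrite D2; split; lra.
split.
  move=> r /andP[r1 r2]; case: r r1 r2 => [|[|r]] // _ _; rewrite D2; lra.
split; first by rewrite D1; split; lra.
by split => // r /andP[r1 r2]; case: r r1 r2.
Qed.

Lemma total2 : m = 2 -> total Dm m = 1/2.
Proof.
move=> m2; rewrite [X in total _ X]m2; have D2 : Dm 2 = 1/2 by rewrite /Dm m2.
have D1 : Dm 1 = 0 by [].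
have -> : total Dm 2 = Dm 2 * 1%:R + (Dm 1 * 0%:R + 0) by [].
rewrite D2 D1; lra.
Qed.

End Final.
Unset Implicit Arguments.
Unset Strict Implicit.
Theorem mainTheorem10 (R : realType) (m : nat) (hm : (2 <= m)%N)
    (P : ranking m -> R) (hP : is_profile P) :
  exists t : ranking m, pair_priceable P t.
Proof.
case: hP => P01 Psum.
pose N := ('C(m, 2))%:R : R.
pose b := fun s => N * P s.
have b0 : forall s, 0 <= b s.
  by move=> s; apply: mulr_ge0; [exact: ler0n | case/andP: (P01 s)].
have sb : \sum_s b s = N by rewrite /b -mulr_sumr Psum mulr1.
have [vD tD] : valid (Dm R m) N m /\ N - 1 < total (Dm R m) m.
  have [m2|m2] := eqVneq m 2.
    have N1 : N = 1 by rewrite /N m2.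
    rewrite N1; split; first exact: valid2.
    by rewrite total2 //; lra.
  have h3 : (3 <= m)%N by rewrite ltn_neqAle eq_sym m2 hm.
  have m3 : (m - 3).+3 = m by rewrite -addn3 subnK.
  have v3 := valid3 R (m - 3) m2; have t3 := total3 R (m - 3) m2.
  rewrite m3 in v3 t3; split; first exact: v3.
  by rewrite t3 /N; lra.
have cX : #|[set: 'I_m]| = m by rewrite cardsT card_ord.
have vD' : valid (Dm R m) (\sum_s b s) m by rewrite sb.
have [sq [pi [uq [mem [pos [bud [pair tot]]]]]]] :=
  @gen R m (Dm R m) m [set: 'I_m] b cX b0 vD'.
have [t tE] : exists t : ranking m, forall u v, prefers t u v = before sq u v.
  apply: seq_perm => //; first by apply: leq_trans hm.
  by move=> z; rewrite mem in_setT.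
exists t, pi.
have eqs : forall (F : 'I_m -> 'I_m -> R),
    \sum_x \sum_(y | prefers t x y) F x y = \sum_x \sum_(y | before sq x y) F x y.
  by move=> F; apply: eq_bigr => x _; apply: eq_bigl => y; rewrite tE.
split; [|split; [|split; [|split]]].
- move=> s x y; rewrite tE => bxy; have [p0 p1] := pos s x y bxy; apply/andP; split => //.
  apply: le_trans (pair x y bxy).
  exact: (le_sum_all s (fun s' => (pos s' x y bxy).1)).
- move=> s x y; rewrite tE => bxy.
  have nxy : x != y by apply: contraTneq bxy => ->; rewrite /before ltnn andbF.
  by rewrite util_eq //; exact: (pos s x y bxy).2.
- by move=> s; rewrite eqs; exact: bud.
- by move=> x y; rewrite tE; exact: pair.
- under eq_bigr do rewrite eqs.
  exact: lt_le_trans tD tot.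
Qed.
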